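(* Let $n\geqslant 2$, let $\mathfrak{K}$ be an algebraically closed field of characteristic zero with a primitive $n$-th root of unity $\zeta$, let $G=(\mathbb{Z}/n)^3$ with basis $e_1,e_2,e_3$, and let $\omega$ be the $3$-cocycle $\omega(e_1^{a_{11}}e_2^{a_{12}}e_3^{a_{13}},e_1^{a_{21}}e_2^{a_{22}}e_3^{a_{23}},e_1^{a_{31}}e_2^{a_{32}}e_3^{a_{33}})=\zeta^{a_{11}a_{22}a_{33}}$. Let $z=e_1$. Then $\gamma_{\omega,z}(e_1^{a_{11}}e_2^{a_{12}}e_3^{a_{13}},e_1^{a_{21}}e_2^{a_{22}}e_3^{a_{23}})=\zeta^{a_{12}a_{23}+a_{11}a_{22}}$, which is cohomologically nontrivial, the twisted group algebra satisfies $\mathfrak{K}^{\gamma_{\omega,z}}G\cong\bigoplus_{i=1}^n\mathrm{M}_n(\mathfrak{K})$, and for $m\geqslant 1$ the class of $X_z^{\oplus m}$ lies in the image of the characteristic homomorphism $\mathrm{Iso}(\mathbf{Z}(\mathbb{B}(\mathbf{Vec}_G^\omega)))\to\mathrm{Z}(\mathbf{Ho}(\mathbb{B}(\mathbf{Vec}_G^\omega)))$ if and only if $n$ divides $m$.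
   Context: $\mathbf{Vec}_G^\omega$ is the fusion category of finite-dimensional $G$-graded $\mathfrak{K}$-vector spaces with simple objects $X_g$ ($g\in G$), $X_g\otimes X_h=X_{gh}$, and associativity constraint $(X_g\otimes X_h)\otimes X_k\to X_g\otimes(X_h\otimes X_k)$ given by $\omega(g,h,k)$. For central $z$, $\gamma_{\omega,z}(g,h)=\omega(g,h,z)\omega(g,z,h)^{-1}\omega(z,g,h)$, a $2$-cocycle. The twisted group algebra $\mathfrak{K}^{\gamma}G$ has basis $\{u_g\}$ with $u_gu_h=\gamma(g,h)u_{gh}$. $\mathbb{B}(\mathbf{Vec}_G^\omega)$ is the one-object bicategory with endomorphism category $\mathbf{Vec}_G^\omega$; its Drinfeld center is the usual Drinfeld center of $\mathbf{Vec}_G^\omega$ (objects $X$ with half-braidings $p(Y)\colon X\otimes Y\to Y\otimes X$ natural in $Y$, unital and satisfying the hexagon compatibility with $\otimes$). $\mathrm{Z}(\mathbf{Ho}(\mathbb{B}(\mathbf{Vec}_G^\omega)))$ is the monoid of isomorphism classes $[X]$ with $X\otimes Y\cong Y\otimes X$ for all $Y$, and the characteristic homomorphism sends $[(X,p)]\mapsto[X]$.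
   Formalization: The value of $\gamma_{\omega,z}(e_1^{a_{11}}e_2^{a_{12}}e_3^{a_{13}},e_1^{a_{21}}e_2^{a_{22}}e_3^{a_{23}})$ is given as $\zeta^{a_{12}a_{23}}$ in place of $\zeta^{a_{12}a_{23}+a_{11}a_{22}}$. The statement above fails without it. *)

(* Defs.v *)
From HB Require Import structures.
From mathcomp Require Import all_boot all_order all_algebra.
Set Implicit Arguments. Unset Strict Implicit. Unset Printing Implicit Defensive.
Import Order.TTheory GRing.Theory Num.Theory.
Local Open Scope ring_scope.

(* A finite-dimensional G-graded K-vector space is given by a homogeneous   *)
(* basis: a finite type [gbasis] together with a degree map [gdeg].  Every  *)
(* f.d. G-graded space has such a basis, so this is (a skeleton-free model  *)
(* of) the usual category.  Morphisms are grading-preserving matrices       *)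
(* indexed by the two bases (row convention: f(x) = sum_y f x y * y).       *)

Section VecGomega.
Variables (K : fieldType) (G : finType) (mulG : G -> G -> G) (oneG : G)
          (w : G -> G -> G -> K).

Record gvs := GVS { gbasis : finType; gdeg : gbasis -> G }.

Definition gmx (X Y : gvs) := gbasis X -> gbasis Y -> K.

Definition mx_eq (X Y : gvs) (f g : gmx X Y) : Prop :=
  forall x y, f x y = g x y.

Definition is_hom (X Y : gvs) (f : gmx X Y) : Prop :=
  forall x y, gdeg x != gdeg y -> f x y = 0.

Definition idm (X : gvs) : gmx X X := fun x x' => (x == x')%:R.
Arguments idm X : clear implicits.

Definition compm (X Y Z : gvs) (g : gmx Y Z) (f : gmx X Y) : gmx X Z :=
  fun x z => \sum_(y : gbasis Y) f x y * g y z.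

Definition tens (X Y : gvs) : gvs :=
  @GVS (gbasis X * gbasis Y)%type (fun p => mulG (gdeg p.1) (gdeg p.2)).

Definition tensm (X X' Y Y' : gvs) (f : gmx X X') (g : gmx Y Y') :
  gmx (tens X Y) (tens X' Y') :=
  fun p q => f p.1 q.1 * g p.2 q.2.

Definition unito : gvs := @GVS unit (fun _ => oneG).

Definition assoc (X Y Z : gvs) : gmx (tens (tens X Y) Z) (tens X (tens Y Z)) :=
  fun p q => ((p.1.1 == q.1) && (p.1.2 == q.2.1) && (p.2 == q.2.2))%:R
             * w (gdeg p.1.1) (gdeg p.1.2) (gdeg p.2).

Definition assoc_inv (X Y Z : gvs) : gmx (tens X (tens Y Z)) (tens (tens X Y) Z) :=
  fun p q => ((p.1 == q.1.1) && (p.2.1 == q.1.2) && (p.2.2 == q.2))%:R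
             / w (gdeg p.1) (gdeg p.2.1) (gdeg p.2.2).

Arguments assoc X Y Z : clear implicits.
Arguments assoc_inv X Y Z : clear implicits.

Definition giso (X Y : gvs) : Prop :=
  exists (f : gmx X Y) (g : gmx Y X),
    [/\ is_hom f, is_hom g, mx_eq (compm g f) (idm X) & mx_eq (compm f g) (idm Y)].

(* A half-braiding on X: p(Y) : X (x) Y -> Y (x) X, natural in Y, unital
   and satisfying the hexagon compatibility with the tensor product.
   (omega is normalised in our application, so the unitors are the
   canonical identifications X (x) 1 = X = 1 (x) X.) *)
Definition half_braiding (X : gvs) (p : forall Y : gvs, gmx (tens X Y) (tens Y X))
  : Prop :=
  [/\
      forall Y, is_hom (p Y),
      forall (Y Y' : gvs) (f : gmx Y Y'), is_hom f ->
        mx_eq (compm (p Y') (tensm (idm X) f)) (compm (tensm f (idm X)) (p Y)),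
      (forall x x', p unito (x, tt) (tt, x') = (x == x')%:R) &
      forall Y Z : gvs,
        mx_eq (p (tens Y Z))
          (compm (assoc_inv Y Z X)
            (compm (tensm (idm Y) (p Z))
              (compm (assoc Y X Z)
                (compm (tensm (p Y) (idm Z)) (assoc_inv X Y Z)))))].

(* [X] lies in the image of the characteristic homomorphism
   Iso(Z(B(Vec_G^omega))) -> Z(Ho(B(Vec_G^omega))), [(X',p)] |-> [X'] *)
Definition in_char_image (X : gvs) : Prop :=
  exists (X' : gvs) (p : forall Y : gvs, gmx (tens X' Y) (tens Y X')),
    half_braiding p /\ giso X' X.

End VecGomega.

Definition Xsum (G : finType) (g : G) (m : nat) : gvs G :=
  @GVS G 'I_m (fun _ => g).

Definition gamma_wz (K : fieldType) (G : Type) (w : G -> G -> G -> K) (z : G)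
  (g h : G) : K := w g h z / w g z h * w z g h.

Definition is_coboundary (K : fieldType) (G : zmodType) (gam : G -> G -> K) : Prop :=
  exists mu : G -> K, (forall g, mu g != 0) /\
    forall g h, gam g h = mu g * mu h / mu (g + h).

Section TwistedGroupAlgebra.
Variables (K : fieldType) (G : finZmodType) (gam : G -> G -> K).

(* K^gam G : elements are coefficient families a = sum_g a(g) u_g,
   with u_g u_h = gam(g,h) u_{gh} *)
Definition tga_mul (a b : {ffun G -> K}) : {ffun G -> K} :=
  [ffun k => \sum_(g : G) \sum_(h : G | g + h == k) a g * b h * gam g h].

Definition tga_one : {ffun G -> K} := [ffun g => (g == 0)%:R / gam 0 0].

Definition tga_iso_sum_mat (r d : nat) : Prop :=
  exists phi : {ffun G -> K} -> {ffun 'I_r -> 'M[K]_d},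
    [/\ forall (c : K) (a b : {ffun G -> K}), phi [ffun g => c * a g + b g] = [ffun i => c *: phi a i + phi b i],
        bijective phi,
        forall a b, phi (tga_mul a b) = [ffun i => phi a i *m phi b i] &
        phi tga_one = [ffun _ => 1%:M]].

End TwistedGroupAlgebra.

Definition G3 (n : nat) := ('Z_n * 'Z_n * 'Z_n)%type.
HB.instance Definition _ n := GRing.Zmodule.on (G3 n).
HB.instance Definition _ n := Finite.on (G3 n).

(* exponents a_1, a_2, a_3 of g = e1^a1 e2^a2 e3^a3, taken in {0,...,n-1} *)
Definition c1 n (g : G3 n) : nat := g.1.1.
Definition c2 n (g : G3 n) : nat := g.1.2.
Definition c3 n (g : G3 n) : nat := g.2.

Definition e1 (n : nat) : G3 n := (1, 0, 0).

Definition omega_ex (K : fieldType) (n : nat) (zeta : K) (g h k : G3 n) : K :=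
  zeta ^+ (c1 g * c2 h * c3 k).

(* Main.v *)
Require Import Defs.
From HB Require Import structures.
From mathcomp Require Import all_boot all_order all_algebra.
From mathcomp Require Import ring.
Set Implicit Arguments. Unset Strict Implicit. Unset Printing Implicit Defensive.
Import Order.TTheory GRing.Theory Num.Theory.
Local Open Scope ring_scope.



Lemma natf_inj (F : fieldType) : [pchar F] =i pred0 -> forall a b : nat, a%:R = b%:R :> F -> a = b.
Proof.
move/pcharf0P=> c0 a b.
wlog ab: a b / (a <= b)%N.
  move=> H; case: (leqP a b) => h; first exact: H.
  by move=> e; symmetry; apply: H; [exact: ltnW|].
move=> e; apply/eqP; rewrite eqn_leq ab /=.
have := natrB F ab; rewrite e subrr => /eqP; rewrite c0 subn_eq0 //.
Qed.

Lemma sum_pow_shift (F : fieldType) m N (B : 'M[F]_m.+1) :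
  B ^+ N = 1 -> (\sum_(k < N) B ^+ k) * B = \sum_(k < N) B ^+ k.
Proof.
move=> BN; case: N BN => [|N] BN; first by rewrite !big_ord0 mul0r.
rewrite mulr_suml.
under eq_bigr do rewrite -exprSr.
rewrite big_ord_recr /= BN [in RHS]big_ord_recl /= expr0 addrC.
by congr (_ + _); apply: eq_bigr => i _.
Qed.



Lemma tr_pid (F : fieldType) m r : (r <= m)%N -> \tr (pid_mx r : 'M[F]_m) = r%:R.
Proof.
move=> rm; rewrite /mxtrace.
rewrite (eq_bigr (fun i : 'I_m => if (i < r)%N then (1:F) else 0)); last by move=> i _; rewrite mxE eqxx; case: (i < r)%N.
rewrite -big_mkcond /=.
rewrite (big_ord_narrow rm) /=.
by rewrite sumr_const card_ord.
Qed.

Lemma tr_idem (F : fieldType) m (P : 'M[F]_m) : P *m P = P -> \tr P = (\rank P)%:R.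
Proof.
move=> PP.
set L := col_ebase P; set U := row_ebase P; pose D : 'M[F]_m := pid_mx (\rank P).
have eP : P = L *m D *m U by rewrite mulmx_ebase.
have DD : D *m D = D by rewrite pid_mx_id ?rank_leq_col.
have key : D *m (U *m L) *m D = D.
  have : L *m (D *m (U *m L) *m D) *m U = L *m D *m U.
    by rewrite -eP -PP {1 2}eP !mulmxA.
  move/(congr1 (mulmx (invmx L))); rewrite !mulmxA mulVmx ?col_ebase_unit // !mul1mx.
  move/(congr1 (mulmx^~ (invmx U))); rewrite -!mulmxA mulmxV ?row_ebase_unit // !mulmx1.
  by rewrite !mulmxA.
rewrite {1}eP mxtrace_mulC mulmxA -DD mulmxA mxtrace_mulC [D *m _]mulmxA key.
by rewrite tr_pid ?rank_leq_col.
Qed.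

Lemma dvd_from_AB (F : fieldType) (N m : nat) (zeta : F) (A Ai B : 'M[F]_m.+1) :
  [pchar F] =i pred0 -> (0 < N)%N -> N.-primitive_root zeta ->
  A * Ai = 1 -> Ai * A = 1 -> A * B = zeta *: (B * A) -> B ^+ N = 1 ->
  (N %| m.+1)%N.
Proof.
move=> c0 N0 prim AAi AiA AB BN.
have ABk k : A * B ^+ k = zeta ^+ k *: (B ^+ k * A).
  elim: k => [|k IH]; first by rewrite !expr0 mulr1 mul1r scale1r.
  rewrite exprSr mulrA IH -scalerAl -[B ^+ k * A * B]mulrA AB -scalerAr scalerA -exprSr mulrA -exprSr.
  by rewrite [B ^+ k.+1]exprSr.
have trk k : (0 < k < N)%N -> \tr (B ^+ k) = 0.
  case/andP=> k0 kN.
  have e : \tr (B ^+ k) = zeta ^+ k * \tr (B ^+ k).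
    have e2 : A * B ^+ k * Ai = zeta ^+ k *: B ^+ k.
      by rewrite ABk -scalerAl -mulrA AAi mulr1.
    rewrite -mxtraceZ -e2 -mulrA -!mulmxE mxtrace_mulC.
    by rewrite !mulmxE -mulrA AiA mulr1.
  have nz : zeta ^+ k != 1.
    by rewrite -(prim_order_dvd prim); apply/negP => /(dvdn_leq k0); rewrite leqNgt kN.
  apply/eqP; move/eqP: e; rewrite eq_sym -subr_eq0 -{2}[\tr _]mul1r -mulrBl mulf_eq0.
  by rewrite subr_eq0 (negPf nz) .
pose S := \sum_(k < N) B ^+ k.
have SBk k : S * B ^+ k = S.
  elim: k => [|k IH]; first by rewrite mulr1.
  by rewrite exprS mulrA sum_pow_shift.
have SS : S * S = S *+ N.
  by rewrite {2}/S mulr_sumr (eq_bigr (fun _ => S)) ?sumr_const ?card_ord // => i _; rewrite SBk.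
have Nz : (N%:R : F) != 0 by rewrite ((pcharf0P _).1 c0) -lt0n.
pose P := N%:R^-1 *: S.
have PP : P *m P = P.
  rewrite mulmxE /P -scalerAl -scalerAr SS scalerA -scaler_nat scalerA.
  by rewrite -mulrA mulVf // mulr1.
have trP : \tr P = N%:R^-1 * (m.+1)%:R.
  rewrite /P mxtraceZ /S raddf_sum /=; congr (_ * _).
  move: trk N0; case: N {Nz P PP SS SBk S ABk BN prim} => // N trk _.
  rewrite big_ord_recl /= expr0 mxtrace1 big1 ?addr0 // => i _.
  by apply: trk; rewrite /= ltnS ltn_ord.
have := tr_idem PP; rewrite trP => e.
have : (m.+1)%:R = (N * \rank P)%:R :> F.
  by rewrite natrM -e mulrA mulfV // mul1r.
by move/(natf_inj c0) ->; apply: dvdn_mulr.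
Qed.

Section Gen.
Variables (K : fieldType) (G : finType) (mulG : G -> G -> G) (oneG : G)
          (w : G -> G -> G -> K).
Local Notation gvs := (gvs G).

Lemma sum_ind (T : finType) (t0 : T) (F : T -> K) (P : pred T) :
  (forall q, P q = (q == t0)) -> \sum_q F q * (P q)%:R = F t0.
Proof.
move=> HP; rewrite (bigD1 t0) //= HP eqxx mulr1 big1 ?addr0 // => q /negPf qn.
by rewrite HP qn mulr0.
Qed.

Lemma sum_pair (A B : finType) (F : A * B -> K) :
  \sum_q F q = \sum_a \sum_b F (a, b).
Proof. by rewrite (pair_bigA _ (fun a b => F (a, b))); apply: eq_bigr => -[]. Qed.

Lemma ainvL (X Y Z W : gvs) (F : gmx K (tens mulG (tens mulG X Y) Z) W) x y z q :
  compm F (@assoc_inv K G mulG w X Y Z) (x, (y, z)) q =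
  (w (gdeg x) (gdeg y) (gdeg z))^-1 * F ((x, y), z) q.
Proof.
rewrite /compm (bigD1 ((x, y), z)) //= [X in _ + X]big1 ?addr0.
  by rewrite /assoc_inv /= !eqxx mul1r.
move=> [[a b] c] /=; rewrite /assoc_inv /= => ne.
case: eqP => [ea|]; last by rewrite /= !mul0r.
case: eqP => [eb|]; last by rewrite /= !mul0r.
case: eqP => [ec|]; last by rewrite /= !mul0r.
by rewrite -ea -eb -ec eqxx in ne.
Qed.

Lemma assocR (X Y Z W : gvs) (F : gmx K W (tens mulG (tens mulG X Y) Z)) a q :
  compm (@assoc K G mulG w X Y Z) F a q =
  F a ((q.1, q.2.1), q.2.2) * w (gdeg q.1) (gdeg q.2.1) (gdeg q.2.2).
Proof.
rewrite /compm (bigD1 ((q.1, q.2.1), q.2.2)) //= [X in _ + X]big1 ?addr0.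
  by rewrite /assoc /= !eqxx mul1r.
move=> [[a' b] c] /=; rewrite /assoc /= => ne.
case: eqP => [ea|]; last by rewrite /= !mul0r mulr0.
case: eqP => [eb|]; last by rewrite /= !mul0r mulr0.
case: eqP => [ec|]; last by rewrite /= !mul0r mulr0.
by rewrite ea eb ec eqxx in ne.
Qed.

Lemma ainvR (X Y Z W : gvs) (F : gmx K W (tens mulG X (tens mulG Y Z))) a r :
  compm (@assoc_inv K G mulG w X Y Z) F a r =
  F a (r.1.1, (r.1.2, r.2)) * (w (gdeg r.1.1) (gdeg r.1.2) (gdeg r.2))^-1.
Proof.
rewrite /compm (bigD1 (r.1.1, (r.1.2, r.2))) //= [X in _ + X]big1 ?addr0.
  by rewrite /assoc_inv /= !eqxx mul1r.
move=> [a' [b c]] /=; rewrite /assoc_inv /= => ne.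
case: eqP => [ea|]; last by rewrite /= !mul0r mulr0.
case: eqP => [eb|]; last by rewrite /= !mul0r mulr0.
case: eqP => [ec|]; last by rewrite /= !mul0r mulr0.
by rewrite ea eb ec eqxx in ne.
Qed.

Lemma hex_rhs (X Y Z : gvs) (p : forall Y : gvs, gmx K (tens mulG X Y) (tens mulG Y X))
  x y z y' z' x' :
  compm (@assoc_inv K G mulG w Y Z X)
    (compm (tensm (@idm K G Y) (p Z))
      (compm (@assoc K G mulG w Y X Z)
        (compm (tensm (p Y) (@idm K G Z)) (@assoc_inv K G mulG w X Y Z)))) (x, (y, z)) ((y', z'), x')
  = (w (gdeg x) (gdeg y) (gdeg z))^-1 * (w (gdeg y') (gdeg z') (gdeg x'))^-1 *
    \sum_x1 p Y (x, y) (y', x1) * w (gdeg y') (gdeg x1) (gdeg z) * p Z (x1, z) (z', x').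
Proof.
rewrite ainvR /= {1}/compm.
under [in LHS]eq_bigr => q _ do rewrite assocR ainvL.
rewrite sum_pair (bigD1 y') //= [X in _ + X]big1 ?addr0; last first.
  move=> a ne; apply: big1 => b _; rewrite /tensm /idm /= eq_sym (negPf ne).
  by rewrite !(mul0r, mulr0).
rewrite sum_pair mulr_sumr mulr_suml; apply: eq_bigr => x1 _.
rewrite (bigD1 z) //= [X in _ + X]big1 ?addr0; last first.
  move=> c ne; rewrite /tensm /idm /= eq_sym (negPf ne).
  by rewrite !(mul0r, mulr0).
rewrite /tensm /idm /= !eqxx mulr1 mul1r; ring.
Qed.

Lemma giso_deg (X Y : gvs) (d : G) : giso K X Y -> (forall y : gbasis Y, gdeg y = d) ->
  forall x : gbasis X, gdeg x = d.
Proof.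
case=> f [g [hf hg e1 e2]] hy x; case: (eqVneq (gdeg x) d) => // ne.
have := e1 x x; rewrite /compm /idm eqxx big1 => [/esym/eqP|y _]; first by rewrite oner_eq0.
by rewrite hf ?mul0r // hy.
Qed.

Lemma reindex_bij (T : finType) k (ev : 'I_k -> T) (F : T -> K) : bijective ev ->
  \sum_(x : T) F x = \sum_(i < k) F (ev i).
Proof. by move=> bev; apply: reindex; apply: onW_bij. Qed.

Lemma giso_card (X Y : gvs) : [pchar K] =i pred0 -> giso K X Y ->
  #|gbasis X| = #|gbasis Y|.
Proof.
move=> c0 [f [g [hf hg e1 e2]]].
pose F : 'M[K]_(#|gbasis X|, #|gbasis Y|) := \matrix_(i, j) f (enum_val i) (enum_val j).
pose Gm : 'M[K]_(#|gbasis Y|, #|gbasis X|) := \matrix_(i, j) g (enum_val i) (enum_val j).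
have bX : bijective (@enum_val _ (@predT (gbasis X))) by exists enum_rank; [exact: enum_valK | exact: enum_rankK].
have bY : bijective (@enum_val _ (@predT (gbasis Y))) by exists enum_rank; [exact: enum_valK | exact: enum_rankK].
have FG : F *m Gm = 1%:M.
  apply/matrixP => i j; rewrite !mxE.
  under eq_bigr do rewrite !mxE.
  rewrite -(reindex_bij (fun y => f (enum_val i) y * g y (enum_val j)) bY).
  have := e1 (enum_val i) (enum_val j); rewrite /compm /idm => ->.
  by rewrite (inj_eq enum_val_inj).
have GF : Gm *m F = 1%:M.
  apply/matrixP => i j; rewrite !mxE.
  under eq_bigr do rewrite !mxE.
  rewrite -(reindex_bij (fun x => g (enum_val i) x * f x (enum_val j)) bX).
  have := e2 (enum_val i) (enum_val j); rewrite /compm /idm => ->.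
  by rewrite (inj_eq enum_val_inj).
have := mxtrace_mulC F Gm; rewrite FG GF !mxtrace1; exact: natf_inj.
Qed.
End Gen.



Section Main.
Variables (n' : nat) (K : fieldType) (zeta : K).
Hypothesis prim : (n'.+2).-primitive_root zeta.
Local Notation N := n'.+2.

Lemma val1Z : (1 %% (Zp_trunc N).+2 = 1)%N.
Proof. by rewrite modn_small. Qed.

Lemma gamE (g h : G3 N) : gamma_wz (omega_ex zeta) (e1 N) g h = zeta ^+ (c2 g * c3 h).
Proof.
rewrite /gamma_wz /omega_ex /c1 /c2 /c3 /e1 /= val1Z.
by rewrite !muln0 mul0n !expr0 divr1 !mul1r mul1n.
Qed.

Definition e2 : G3 N := (0, 1, 0).
Definition e3 : G3 N := (0, 0, 1).

Lemma not_cob : ~ is_coboundary (gamma_wz (omega_ex zeta) (e1 N)).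
Proof.
case=> mu [_ H].
have : gamma_wz (omega_ex zeta) (e1 N) e2 e3 = gamma_wz (omega_ex zeta) (e1 N) e3 e2.
  by rewrite !H addrC (mulrC (mu e2)).
rewrite !gamE /c2 /c3 /e2 /e3 /= val1Z.
move/eqP; rewrite muln1 mul0n expr0 -(prim_order_dvd prim) => /(dvdn_leq (ltn0Sn 0)).
by [].
Qed.

Lemma zmr a b : zeta ^+ (a * (b %% N)) = zeta ^+ (a * b).
Proof. by rewrite mulnC exprM (prim_expr_mod prim) -exprM mulnC. Qed.
Lemma zml a b : zeta ^+ ((a %% N) * b) = zeta ^+ (a * b).
Proof. by rewrite exprM (prim_expr_mod prim) -exprM. Qed.

Definition Amx (g : G3 N) : 'M[K]_N :=
  \matrix_(r, s) ((r == (s : 'Z_N) + g.2 :> 'Z_N)%:R * zeta ^+ (c2 g * s)).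

Lemma AmxM g h : Amx g *m Amx h = zeta ^+ (c2 g * c3 h) *: Amx (g + h).
Proof.
apply/matrixP => r t; rewrite !mxE (bigD1 ((t : 'Z_N) + h.2)) //= big1 ?addr0; last first.
  by move=> s /negPf; rewrite !mxE eq_sym => ->; rewrite mul0r mulr0.
rewrite !mxE eqxx mul1r -addrA (addrC h.2) mulrCA -mulrA; congr (_ * _).
rewrite /c2 /c3 /= /Zp_trunc /= zmr zml -!exprD; congr (zeta ^+ _).
rewrite mulnDr mulnDl addnA; congr (_ + _); exact: addnC.
Qed.


Lemma zeta_neq0 : zeta != 0.
Proof.
apply/negP => /eqP z0; have := prim_expr_order prim; rewrite z0 expr0n /=.
by move/eqP; rewrite eq_sym oner_eq0.
Qed.

Lemma orth (x y : nat) : (x < N)%N -> (y < N)%N ->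
  \sum_(i < N) zeta ^+ (i * x) * zeta^-1 ^+ (i * y) = (x == y)%:R * N%:R.
Proof.
move=> xN yN.
have zy0 : zeta ^+ y != 0 by rewrite expf_neq0 // zeta_neq0.
rewrite (eq_bigr (fun i : 'I_N => (zeta ^+ x / zeta ^+ y) ^+ i)); last first.
  by move=> i _; rewrite exprMn -exprVn -!exprM !(mulnC i).
case: eqP => [-> | ne].
  by rewrite divff // (eq_bigr (fun _ => 1)) ?sumr_const ?card_ord ?mul1r // => i _; rewrite expr1n.
set q := _ / _.
have q1 : q != 1.
  rewrite /q; apply/negP => /eqP e; apply: ne; apply/eqP.
  have : zeta ^+ x == zeta ^+ y by rewrite -[zeta ^+ y]mul1r -e mulfVK.
  by rewrite (eq_prim_root_expr prim) !modn_small.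
have qN : q ^+ N = 1.
  by rewrite /q exprMn -exprVn -!exprM !(mulnC _ N) !exprM exprVn (prim_expr_order prim) invr1 !expr1n mulr1.
have := subrX1 q N; rewrite qN subrr => /esym/eqP; rewrite mulf_eq0 subr_eq0 (negPf q1) /=.
by move/eqP => ->; rewrite mul0r.
Qed.


Definition phi (a : {ffun G3 N -> K}) : {ffun 'I_N -> 'M[K]_N} :=
  [ffun i : 'I_N => \sum_(g : G3 N) (a g * zeta ^+ (i * c1 g)) *: Amx g].

Lemma Amx0 : Amx 0 = 1%:M.
Proof. by apply/matrixP => r s; rewrite !mxE addr0 /c2 /= mul0n expr0 mulr1. Qed.

Lemma phi_lin (c : K) (a b : {ffun G3 N -> K}) :
  phi [ffun g => c * a g + b g] = [ffun i => c *: phi a i + phi b i].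
Proof.
apply/ffunP => i; rewrite !ffunE scaler_sumr -big_split /=.
by apply: eq_bigr => g _; rewrite ffunE scalerA -scalerDl mulrA mulrDl.
Qed.

Lemma phi_one : phi (tga_one (gamma_wz (omega_ex zeta) (e1 N))) = [ffun _ => 1%:M].
Proof.
apply/ffunP => i; rewrite !ffunE (bigD1 0) //= big1 ?addr0; last first.
  by move=> g /negPf gne; rewrite ffunE gne mul0r mul0r scale0r.
rewrite ffunE eqxx gamE /c1 /c2 /c3 /= muln0 expr0 divr1 muln0 expr0 mulr1 scale1r; exact: Amx0.
Qed.

Lemma sum_mulmx (A B : G3 N -> 'M[K]_N) (c d : G3 N -> K) :
  (\sum_g c g *: A g) *m (\sum_h d h *: B h) = \sum_g \sum_h (c g * d h) *: (A g *m B h).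
Proof.
rewrite mulmx_suml; apply: eq_bigr => g _; rewrite mulmx_sumr; apply: eq_bigr => h _.
by rewrite -scalemxAl -scalemxAr scalerA.
Qed.

Lemma phi_mul (a b : {ffun G3 N -> K}) :
  phi (tga_mul (gamma_wz (omega_ex zeta) (e1 N)) a b) = [ffun i => phi a i *m phi b i].
Proof.
apply/ffunP => i; rewrite !ffunE sum_mulmx.
rewrite (eq_bigr (fun k => \sum_g \sum_(h | g + h == k)
   (a g * b h * gamma_wz (omega_ex zeta) (e1 N) g h * zeta ^+ (i * c1 k)) *: Amx k)); last first.
  move=> k _; rewrite ffunE mulr_suml scaler_suml; apply: eq_bigr => g _.
  by rewrite mulr_suml scaler_suml.
rewrite exchange_big; apply: eq_bigr => g _.
rewrite (exchange_big_dep xpredT) //=; apply: eq_bigr => h _.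
rewrite (eq_bigl (fun k => k == g + h)); last by move=> k; rewrite eq_sym.
rewrite big_pred1_eq AmxM scalerA gamE; congr (_ *: _).
rewrite /c1 /= /Zp_trunc /= zmr mulnDr exprD; ring.
Qed.


Definition psi (M : {ffun 'I_N -> 'M[K]_N}) : {ffun G3 N -> K} :=
  [ffun g : G3 N => (N%:R ^+ 2)^-1 * \sum_(i < N) \sum_(s < N)
     (zeta^-1 ^+ (i * c1 g) * zeta^-1 ^+ (s * c2 g) * M i ((s : 'Z_N) + g.2) s)].

Lemma phiE a i r s : phi a i r s =
  \sum_g a g * zeta ^+ (i * c1 g) * ((r == (s : 'Z_N) + g.2 :> 'Z_N)%:R * zeta ^+ (c2 g * s)).
Proof. by rewrite ffunE summxE; apply: eq_bigr => g _; rewrite !mxE mulrA. Qed.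

Hypothesis NK : (N%:R : K) != 0.

Lemma psiK : cancel phi psi.
Proof.
move=> a; apply/ffunP => g; rewrite ffunE.
under eq_bigr do under eq_bigr do rewrite phiE mulr_sumr.
under eq_bigr do rewrite exchange_big.
rewrite exchange_big /=.
rewrite (eq_bigr (fun j => a j * (g.2 == j.2)%:R * ((c1 j == c1 g)%:R * N%:R) *
                         ((c2 j == c2 g)%:R * N%:R))); last first.
  move=> j _; rewrite -!orth ?ltn_ord // -mulrA [in RHS]mulr_suml [in RHS]mulr_sumr.
  apply: eq_bigr => i _; rewrite [in RHS]mulr_sumr [in RHS]mulr_sumr; apply: eq_bigr => i0 _.
  rewrite (inj_eq (addrI _)) (mulnC (c2 j)); ring.
rewrite (bigD1 g) //= big1 ?addr0; last first.
  move=> j jg; case: eqP => [e2|]; last by move=> _; rewrite !(mul0r, mulr0).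
  case: eqP => [e1|]; last by move=> _; rewrite !(mul0r, mulr0).
  case: eqP => [e3|]; last by move=> _; rewrite !(mul0r, mulr0).
  exfalso; move/negP: jg; apply; apply/eqP.
  case: j e1 e2 e3 => [[j1 j2] j3]; case: g => [[g1 g2] g3] /= e1 e2 e3.
  by rewrite /c1 /c2 /= in e1 e3; rewrite e2; congr (_, _, _); apply: val_inj.
rewrite !eqxx mulr1 !mul1r -mulrA -expr2 mulrCA mulVf ?mulr1 //.
by rewrite expf_neq0.
Qed.


Lemma split3 (F : G3 N -> K) :
  \sum_(g : G3 N) F g = \sum_(x : 'Z_N) \sum_(y : 'Z_N) \sum_(z : 'Z_N) F (x, y, z).
Proof.
rewrite (pair_bigA _ (fun (x : 'Z_N) y => \sum_(z : 'Z_N) F (x, y, z))) /=.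
rewrite (pair_bigA _ (fun (p : 'Z_N * 'Z_N) (z : 'Z_N) => F (p.1, p.2, z))) /=.
by apply: eq_bigr => -[[]].
Qed.

Lemma expand2 (I J : finType) (C : K) (X : I -> K) (Y : J -> K) :
  C * (\sum_x X x) * (\sum_y Y y) = \sum_x \sum_y C * X x * Y y.
Proof.
rewrite -mulrA mulr_suml mulr_sumr; apply: eq_bigr => x _; rewrite !mulr_sumr.
by apply: eq_bigr => y _; rewrite mulrA.
Qed.

Lemma expand2' (I J : finType) (C D E : K) (T : I -> J -> K) :
  C * (\sum_x \sum_y T x y) * D * E = \sum_x \sum_y C * T x y * D * E.
Proof.
rewrite -!mulrA mulr_suml mulr_sumr; apply: eq_bigr => x _.
rewrite mulr_suml mulr_sumr; apply: eq_bigr => y _; by rewrite !mulrA.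
Qed.

Lemma phiK : cancel psi phi.
Proof.
move=> M; apply/ffunP => i; apply/matrixP => r s; rewrite phiE.
under eq_bigr do rewrite ffunE.
rewrite split3 /=.
under eq_bigr do rewrite exchange_big /=.
rewrite exchange_big /= (bigD1 ((r : 'Z_N) - s)) //= [X in _ + X]big1 ?addr0; last first.
  move=> z zne; apply: big1 => x _; apply: big1 => y _.
  have -> : (r == (s : 'Z_N) + z) = false.
    by apply/negbTE; apply: contra zne => /eqP ->; rewrite addrC addKr.
  by rewrite /= !(mul0r, mulr0).
rewrite /=.
transitivity (\sum_(i2 < N) \sum_(s0 < N) N%:R^-2 * M i2 ((s0 : 'Z_N) + (r - s)) s0 *
                 (((i : nat) == i2)%:R * N%:R) * (((s : nat) == s0)%:R * N%:R)).
  under [RHS]eq_bigr => i2 _ do under eq_bigr => s0 _ do rewrite -!orth ?ltn_ord // expand2.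
  under [RHS]eq_bigr do rewrite exchange_big.
  rewrite [RHS]exchange_big.
  under [RHS]eq_bigr do under eq_bigr do rewrite exchange_big.
  under [RHS]eq_bigr do rewrite exchange_big.
  have -> : (r == (s : 'Z_N) + (r - s)) by rewrite addrC subrK.
  apply: eq_bigr => x _; apply: eq_bigr => y _; rewrite expand2'.
  apply: eq_bigr => i2 _; apply: eq_bigr => s0 _.
  rewrite /c1 /c2 /= (mulnC s0) (mulnC i2) (mulnC y s) (mulnC x i); ring.
rewrite (bigD1 i) //= [X in _ + X]big1 ?addr0; last first.
  move=> i2 ne; apply: big1 => s0 _; case: eqP => [e|_]; last by rewrite !(mul0r, mulr0).
  by case/eqP: ne; apply: val_inj; apply/esym.
rewrite (bigD1 s) //= [X in _ + X]big1 ?addr0; last first.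
  move=> s0 ne; have -> : ((s : nat) == s0) = false by rewrite eq_sym; exact: negbTE ne.
  by rewrite !(mul0r, mulr0).
rewrite !eqxx !mul1r addrC subrK.
rewrite (_ : _ * _ = M i r s * (N%:R^-2 * (N%:R * N%:R))); last by ring.
by rewrite -expr2 mulVf ?mulr1 // expf_neq0.
Qed.


Hypothesis c0 : [pchar K] =i pred0.

Local Notation w := (omega_ex zeta).

Definition S (g : G3 N) : gvs (G3 N) := @GVS (G3 N) unit (fun _ => g).

Lemma sum_unit (F : unit -> K) : \sum_(b : unit) F b = F tt.
Proof. by rewrite (bigD1 tt) //= big1 ?addr0 // => -[]. Qed.

Lemma w_s_gh g h : w (e1 N) g h = zeta ^+ (c2 g * c3 h).
Proof. by rewrite /omega_ex /c1 /e1 /= val1Z mul1n. Qed.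
Lemma w_gh_s g h : w g h (e1 N) = 1.
Proof. by rewrite /omega_ex /c3 /e1 /= muln0 expr0. Qed.
Lemma w_g_s_h g h : w g (e1 N) h = 1.
Proof. by rewrite /omega_ex /c2 /e1 /= muln0 mul0n expr0. Qed.

Section Necessity.
Variables (X : gvs (G3 N)) (p : forall Y : gvs (G3 N), gmx K (tens +%R X Y) (tens +%R Y X)).
Hypothesis hb : half_braiding 0 w p.
Hypothesis dX : forall x : gbasis X, gdeg x = e1 N.

Definition R g (x x' : gbasis X) := @p (S g) (x, tt) (tt, x').

Lemma Rmul g h x x' : \sum_x1 R g x x1 * R h x1 x' = zeta ^+ (c2 g * c3 h) * R (g + h) x x'.
Proof.
case: hb => hom nat unit hex.
pose f : gmx K (tens +%R (S g) (S h)) (S (g + h)) := fun _ _ => 1.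
have hf : is_hom f by move=> [a b] c /=; rewrite eqxx.
have := nat _ _ f hf (x, (tt, tt)) (tt, x').
rewrite /compm sum_pair (bigD1 x) //= [X in _ + X]big1 ?addr0; last first.
  by move=> a ne; rewrite sum_unit /tensm /idm /= eq_sym (negPf ne) !mul0r.
rewrite sum_unit /tensm /idm /f /= eqxx !mul1r.
rewrite sum_pair sum_pair sum_unit sum_unit /= => e.
rewrite (bigD1 x') //= big1 ?addr0 in e; last first.
  by move=> a ne; rewrite (negPf ne) !mulr0.
rewrite eqxx mul1r !mulr1 in e.
rewrite /R e hex hex_rhs /= !dX w_s_gh w_gh_s invr1 mulr1.
under [in RHS]eq_bigr do rewrite dX w_g_s_h mulr1.
rewrite mulrA mulfV ?mul1r // expf_neq0 //; exact: zeta_neq0.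
Qed.

Lemma R0 x x' : R 0 x x' = (x == x')%:R.
Proof. by case: hb => _ _ u _; exact: u. Qed.

Definition e2' : G3 N := (0, -1, 0).

Lemma e2e2' : e2 + e2' = 0.
Proof. by rewrite /e2 /e2' /=; congr (_, _, _); rewrite ?addr0 ?subrr. Qed.

Lemma e3pow k : (0, 0, k%:R) + e3 = (0, 0, k.+1%:R) :> G3 N.
Proof. by rewrite /e3 /=; congr (_, _, _); rewrite ?addr0 // -mulrSr. Qed.

Lemma necessity m : #|gbasis X| = m -> (N %| m)%N.
Proof.
case: m => [|m'] Hc; first exact: dvdn0.
pose ev (i : 'I_m'.+1) : gbasis X := enum_val (cast_ord (esym Hc) i).
have bev : bijective ev.
  exists (fun x => cast_ord Hc (enum_rank x)) => i; rewrite /ev; [by rewrite enum_valK cast_ordKV | by rewrite cast_ordK enum_rankK].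
pose Mat g : 'M[K]_m'.+1 := \matrix_(i, j) R g (ev i) (ev j).
have MatM g h : Mat g * Mat h = zeta ^+ (c2 g * c3 h) *: Mat (g + h).
  apply/matrixP => i j; rewrite -mulmxE !mxE.
  under eq_bigr do rewrite !mxE.
  rewrite -(reindex_bij (fun x1 => R g (ev i) x1 * R h x1 (ev j)) bev); exact: Rmul.
have Mat0 : Mat 0 = 1.
  by apply/matrixP => i j; rewrite !mxE R0 (inj_eq (bij_inj bev)).
have AAi : Mat e2 * Mat e2' = 1.
  by rewrite MatM e2e2' Mat0 /c3 /= muln0 expr0 scale1r.
have AiA : Mat e2' * Mat e2 = 1.
  by rewrite MatM addrC e2e2' Mat0 /c3 /= muln0 expr0 scale1r.
have AB : Mat e2 * Mat e3 = zeta *: (Mat e3 * Mat e2).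
  rewrite !MatM addrC /c2 /c3 /= val1Z muln1 expr1 mul0n expr0 scale1r.
  done.
have Bk k : Mat e3 ^+ k = Mat (0, 0, k%:R).
  elim: k => [|k IH]; first by rewrite expr0 -Mat0.
  by rewrite exprSr IH MatM e3pow /c2 /= mul0n expr0 scale1r.
have BN : Mat e3 ^+ N = 1.
  by rewrite Bk pchar_Zp // -Mat0.
exact: (dvd_from_AB c0 (ltn0Sn _) prim AAi AiA AB BN).
Qed.

End Necessity.


Section Sufficiency.
Variable q : nat.

Definition Xq : gvs (G3 N) := @GVS (G3 N) ('I_q * 'I_N)%type (fun _ => e1 N).

Definition Rs g (x x' : 'I_q * 'I_N) : K := (x.1 == x'.1)%:R * Amx g x.2 x'.2.

Definition pb (Y : gvs (G3 N)) : gmx K (tens +%R Xq Y) (tens +%R Y Xq) :=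
  fun a b => (a.2 == b.1)%:R * Rs (gdeg a.2) a.1 b.2.

Lemma RsM g h x x' : \sum_x1 Rs g x x1 * Rs h x1 x' = zeta ^+ (c2 g * c3 h) * Rs (g + h) x x'.
Proof.
rewrite sum_pair (bigD1 x.1) //= [X in _ + X]big1 ?addr0; last first.
  by move=> a ne; apply: big1 => b _; rewrite /Rs /= eq_sym (negPf ne) !mul0r.
rewrite /Rs /=.
under eq_bigr do rewrite eqxx mul1r mulrCA.
rewrite -mulr_sumr.
have := congr1 (fun M : 'M[K]_N => M x.2 x'.2) (AmxM g h).
rewrite /= !mxE => ->.
by rewrite mulrCA.
Qed.

Lemma pb_hb : half_braiding 0 w pb.
Proof.
split.
- move=> Y [x y] [y' x'] /= ne; have [eyy|nyy] := eqVneq y y'; last by rewrite /pb /= (negPf nyy) mul0r.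
  by rewrite eyy addrC eqxx in ne.
- move=> Y Y' f hf [x y] [y2 x'] /=; rewrite /compm.
  rewrite sum_pair (bigD1 x) //= [X in _ + X]big1 ?addr0; last first.
    by move=> a ne; apply: big1 => b _; rewrite /tensm /idm /= eq_sym (negPf ne) !mul0r.
  rewrite (bigD1 y2) //= [X in _ + X]big1 ?addr0; last first.
    by move=> b ne; rewrite /pb /= (negPf ne) !(mul0r, mulr0).
  rewrite sum_pair (bigD1 y) //= [X in _ + X]big1 ?addr0; last first.
    by move=> b ne; apply: big1 => a _; rewrite /pb /= eq_sym (negPf ne) !mul0r.
  rewrite (bigD1 x') //= [X in _ + X]big1 ?addr0; last first.
    by move=> b ne; rewrite /tensm /idm /= (negPf ne) !(mul0r, mulr0).
  rewrite /tensm /idm /pb /= !eqxx !(mul1r, mulr1).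
  case: (eqVneq (gdeg y) (gdeg y2)) => [->|ne]; first by rewrite mulrC.
  by rewrite hf // !(mul0r, mulr0).
- move=> x x'; rewrite /pb /Rs /= Amx0 mxE mul1r.
  case: x x' => [a b] [a' b'] /=; rewrite xpair_eqE.
  by case: (a == a'); case: (b == b'); rewrite /= ?(mul1r, mul0r).
- move=> Y Z [x [y z]] [[y' z'] x']; rewrite hex_rhs /= w_s_gh w_gh_s w_g_s_h invr1 mulr1.
  rewrite /pb /= xpair_eqE.
  case: (eqVneq y y') => [_|ne]; last first.
    by rewrite /= mul0r big1 ?mulr0 // => b _; rewrite !mul0r.
  case: (eqVneq z z') => [_|ne]; last first.
    by rewrite /= mul0r big1 ?mulr0 // => b _; rewrite !(mul0r, mulr0).
  rewrite /= mul1r.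
  under [in RHS]eq_bigr do rewrite !mul1r mulr1.
  rewrite RsM mulrA mulVf ?mul1r // expf_neq0 //; exact: zeta_neq0.
Qed.

Lemma Xq_iso : giso K Xq (Xsum (e1 N) (q * N)).
Proof.
have Hc : #|{: 'I_q * 'I_N}| = (q * N)%N by rewrite card_prod !card_ord.
pose e (x : 'I_q * 'I_N) : 'I_(q * N) := cast_ord Hc (enum_rank x).
pose e' (y : 'I_(q * N)) : 'I_q * 'I_N := enum_val (cast_ord (esym Hc) y).
have ee' : cancel e' e by move=> y; rewrite /e /e' enum_valK cast_ordKV.
have e'e : cancel e e' by move=> x; rewrite /e /e' cast_ordK enum_rankK.
exists (fun x y => (e x == y)%:R), (fun y x => (e x == y)%:R); split.
- by move=> x y; rewrite eqxx.
- by move=> x y; rewrite eqxx.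
- move=> x x'; rewrite /compm /idm (bigD1 (e x)) //= [X in _ + X]big1 ?addr0.
    by rewrite eqxx mul1r (inj_eq (can_inj e'e)) eq_sym.
  by move=> y ne; rewrite eq_sym (negPf ne) mul0r.
- move=> y y'; rewrite /compm /idm (bigD1 (e' y)) //= [X in _ + X]big1 ?addr0.
    by rewrite ee' eqxx mul1r.
  move=> x ne; case: eqP => [ex|]; last by rewrite mul0r.
  by rewrite -ex e'e eqxx in ne.
Qed.

End Sufficiency.

End Main.
Unset Implicit Arguments.
Unset Strict Implicit.

Theorem mainTheorem14 (n : nat) (K : closedFieldType) (zeta : K) :
  (1 < n)%N -> [pchar K] =i pred0 -> n.-primitive_root zeta ->
  let w := omega_ex zeta in
  let z := e1 n in
  let gam := gamma_wz w z in
  [/\ (forall g h : G3 n, gam g h = zeta ^+ (c2 g * c3 h)),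
      ~ is_coboundary gam,
      tga_iso_sum_mat gam n n &
      forall m : nat, (1 <= m)%N ->
        (in_char_image +%R 0 w (Xsum z m) <-> (n %| m)%N)].
Proof.
case: n => [|[|n']] // _ c0 prim /=.
have NK : (n'.+2)%:R != 0 :> K by rewrite ((pcharf0P _).1 c0).
split.
- by move=> g h; apply: gamE.
- exact: not_cob prim.
- exists (phi zeta); split.
  + by move=> c a b; apply: phi_lin.
  + by exists (psi zeta); [apply: psiK | apply: phiK].
  + by move=> a b; apply: phi_mul.
  + exact: phi_one.
- move=> m _; split.
  + case=> X [p [hb iso]].
    have dX := giso_deg iso (fun _ => erefl).
    have cX := giso_card c0 iso; rewrite card_ord in cX.
    exact: (necessity prim c0 hb dX cX).
  + case/dvdnP => k ->.
    exists (Xq n' k), (@pb n' K zeta k); split; [exact: pb_hb | exact: Xq_iso].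
Qed.
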